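(* Let $G$ be a discrete abelian group (written additively), $\alpha\in\mathcal C_c(G,\mathbf k)$, and consider the convolution equation $\sigma(s)=\alpha\star s$, i.e. $s_g^{(t+1)}=\sum_{h\in G}\alpha_h^{(t)}s_{g-h}^{(t)}$. Let $L^{\rm per}$ be the smallest $\sigma$-subring of ${\rm Seq}(\mathbf C)$ containing $\mathbf k$ and all values $s_g^{(t)}$ of solutions $s$ that are $H$-periodic for some subgroup $H$ of finite index in $G$. Then $$L^{\rm per}=\mathbf k\Big[\prod_{\tau=0}^{t-1}\hat\alpha_\theta^{(\tau)} : \theta\in{\rm Tor}(\widehat G)\Big],$$ where for $\theta\in\widehat G$, $\hat\alpha_\theta^{(\tau)}=\sum_{g\in G}\alpha^{(\tau)}_g\theta(g)$ and $\prod_{\tau=0}^{t-1}\hat\alpha^{(\tau)}_\theta$ denotes the sequence indexed by $t$.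
   Context: ${\rm Seq}(\mathbf C)$ is the ring of complex sequences indexed by $t\in\mathbf Z_{\ge0}$ with shift $\sigma(x)^{(t)}=x^{(t+1)}$; $\mathbf k\subseteq{\rm Seq}(\mathbf C)$ is a $\sigma$-stable subring with constants $\mathbf C$; $\mathcal C_c(G,\mathbf k)$ is the set of finitely supported functions $G\to\mathbf k$. A function $s:G\to{\rm Seq}(\mathbf C)$ is $H$-periodic if $s_{g}=s_{g+h}$ for all $g\in G$, $h\in H$. $\widehat G$ is the group of homomorphisms $G\to\mathbf S^1\subset\mathbf C^*$ and ${\rm Tor}(\widehat G)$ its subgroup of finite-order elements. *)

(* Defs.v *)
From HB Require Import structures.
From mathcomp Require Import all_boot all_order all_algebra.
From mathcomp Require Import boolp classical_sets cardinality fsbigop reals.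
From mathcomp Require Import complex.
Set Implicit Arguments. Unset Strict Implicit. Unset Printing Implicit Defensive.
Import Order.TTheory GRing.Theory Num.Theory.
Local Open Scope ring_scope.
Local Open Scope classical_set_scope.

(* Seq(C): complex sequences indexed by t : nat, with pointwise ring operations. *)
Definition Seq (R : realType) := nat -> R[i].

Definition shift (R : realType) (x : Seq R) : Seq R := fun t => x t.+1.

Definition cseq (R : realType) (c : R[i]) : Seq R := fun _ => c.

Definition is_subring (R : realType) (S : set (Seq R)) : Prop :=
  [/\ S (cseq 1),
      (forall x y, S x -> S y -> S (fun t => x t - y t)) &
      (forall x y, S x -> S y -> S (fun t => x t * y t))].

Definition is_sigma_subring (R : realType) (S : set (Seq R)) : Prop :=
  is_subring S /\ (forall x, S x -> S (shift x)).

(* k is a sigma-stable subring of Seq(C) whose ring of constants is C,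
   i.e. k contains every constant sequence (in Seq(C) the sigma-fixed
   elements are exactly the constant sequences). *)
Definition is_base_ring (R : realType) (k : set (Seq R)) : Prop :=
  is_sigma_subring k /\ (forall c : R[i], k (cseq c)).

Definition gen_ring (R : realType) (A : set (Seq R)) : set (Seq R) :=
  fun x => forall S, is_subring S -> A `<=` S -> S x.

Definition gen_sigma_ring (R : realType) (A : set (Seq R)) : set (Seq R) :=
  fun x => forall S, is_sigma_subring S -> A `<=` S -> S x.

Definition fin_supp_in (R : realType) (G : zmodType) (k : set (Seq R))
    (alpha : G -> Seq R) : Prop :=
  (forall g, k (alpha g)) /\ finite_set [set g | alpha g <> cseq 0].

Definition is_solution (R : realType) (G : zmodType) (alpha s : G -> Seq R) : Prop :=
  forall (g : G) (t : nat),
    s g t.+1 = \sum_(h \in [set: G]) alpha h t * s (g - h) t.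

Definition is_subgroup (G : zmodType) (H : set G) : Prop :=
  [/\ H 0, (forall x, H x -> H (- x)) & (forall x y, H x -> H y -> H (x + y))].

Definition finite_index (G : zmodType) (H : set G) : Prop :=
  exists r : seq G, forall g, exists2 x, x \in r & H (g - x).

Definition periodic (R : realType) (G : zmodType) (H : set G) (s : G -> Seq R) : Prop :=
  forall g h, H h -> s (g + h) = s g.

Definition L_per (R : realType) (G : zmodType) (k : set (Seq R)) (alpha : G -> Seq R)
  : set (Seq R) :=
  gen_sigma_ring (k `|` [set x | exists (s : G -> Seq R) (H : set G) (g : G),
        [/\ is_subgroup H, finite_index H, is_solution alpha s, periodic H s
          & x = s g]]).

Definition is_character (R : realType) (G : zmodType) (theta : G -> R[i]) : Prop :=
  (forall x y, theta (x + y) = theta x * theta y) /\ (forall x, `|theta x| = 1).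

Definition is_torsion_character (R : realType) (G : zmodType) (theta : G -> R[i]) : Prop :=
  is_character theta /\ exists n : nat, (0 < n)%N /\ forall x, theta x ^+ n = 1.

Definition alpha_hat (R : realType) (G : zmodType) (alpha : G -> Seq R)
    (theta : G -> R[i]) : Seq R :=
  fun tau => \sum_(g \in [set: G]) alpha g tau * theta g.

Definition alpha_hat_prod (R : realType) (G : zmodType) (alpha : G -> Seq R)
    (theta : G -> R[i]) : Seq R :=
  fun t => \prod_(tau < t) alpha_hat alpha theta tau.

(* Main.v *)
Require Import Defs.
From HB Require Import structures.
From mathcomp Require Import all_boot all_order all_algebra all_field.
From mathcomp Require Import boolp classical_sets cardinality fsbigop reals.
From mathcomp Require Import complex.
From mathcomp Require Import ring.
Import Order.TTheory GRing.Theory Num.Theory.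
Local Open Scope ring_scope.
Local Open Scope classical_set_scope.


Fixpoint allPr {T : Type} (P : T -> Prop) (s : seq T) : Prop :=
  if s is x :: s' then P x /\ allPr P s' else True.

Lemma allPr_cat {T : Type} (P : T -> Prop) (s1 s2 : seq T) :
  allPr P s1 -> allPr P s2 -> allPr P (s1 ++ s2).
Proof. by elim: s1 => //= x s IH [Px Ps] P2; split => //; apply: IH. Qed.

Lemma allPr_map {T U : Type} (P : U -> Prop) (f : T -> U) (s : seq T) :
  (forall x, P (f x)) -> allPr P (map f s).
Proof. by move=> H; elim: s => //= x s IH; split. Qed.

Lemma prim_root_exists_C (R : realType) (n : nat) :
  (0 < n)%N -> exists z : R[i], n.-primitive_root z.
Proof.
pose p : {poly R[i]} := 'X^n - 1; have [r Dp] := closed_field_poly_normal p.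
move=> n_gt0; rewrite (monicP _) ?monicXnsubC // scale1r in Dp.
have rn1: all n.-unity_root r by apply/allP=> z; rewrite -root_prod_XsubC -Dp.
have sz_r: (n <= size r)%N.
  by rewrite -ltnS -(size_prod_XsubC r id) -Dp size_XnsubC.
have [|z] := hasP (cyclic.has_prim_root n_gt0 rn1 _ sz_r); last by exists z.
by rewrite -separable_prod_XsubC -Dp separable_Xn_sub_1 // pnatr_eq0 -lt0n.
Qed.

Lemma roots_list (R : realType) (n : nat) :
  (0 < n)%N -> exists r : seq R[i], forall z : R[i], z ^+ n = 1 -> z \in r.
Proof.
pose p : {poly R[i]} := 'X^n - 1; have [r Dp] := closed_field_poly_normal p.
move=> n_gt0; rewrite (monicP _) ?monicXnsubC // scale1r in Dp.
exists r => z zn; rewrite -root_prod_XsubC -Dp /p.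
by rewrite /root !hornerE zn subrr.
Qed.

Section Sub.
Variable R : realType.
Implicit Types S A : set (Seq R).

Lemma sub0 {S} : is_subring S -> S (cseq 0).
Proof.
case=> S1 SB _; have := SB _ _ S1 S1.
by have -> : (fun t => cseq 1 t - cseq 1 t) = cseq (0 : R[i]) by apply: funext => t; rewrite /cseq subrr.
Qed.

Lemma subD {S x y} : is_subring S -> S x -> S y -> S (fun t => x t + y t).
Proof.
move=> hS Sx Sy; have S0 := sub0 hS; case: hS => _ SB _.
have := SB _ _ Sx (SB _ _ S0 Sy).
by have -> : (fun t => x t - (cseq 0 t - y t)) = (fun t => x t + y t)
  by apply: funext => t; rewrite /cseq sub0r opprK.
Qed.

Lemma subM {S x y} : is_subring S -> S x -> S y -> S (fun t => x t * y t).
Proof. by case=> _ _ SM; apply: SM. Qed.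

Lemma subSum {T : Type} {S} (L : seq T) (F : T -> Seq R) :
  is_subring S -> allPr (fun p => S (F p)) L -> S (fun t => \sum_(p <- L) F p t).
Proof.
move=> hS; elim: L => [|p L IH] /=.
  move=> _; have -> : (fun t : nat => \sum_(p <- [::]) F p t) = cseq 0
    by apply: funext => t; rewrite big_nil.
  exact: sub0.
case=> Sp SL; have := subD hS Sp (IH SL).
by have -> : (fun t => \sum_(p0 <- p :: L) F p0 t) = (fun t => F p t + \sum_(p <- L) F p t)
  by apply: funext => t; rewrite big_cons.
Qed.

Lemma gen_ring_subring A : is_subring (gen_ring A).
Proof.
split.
- by move=> S [S1 _ _] _.
- by move=> x y gx gy S hS AS; case: (hS) => _ SB _; apply: SB; [apply: gx|apply: gy].
- by move=> x y gx gy S hS AS; case: (hS) => _ _ SM; apply: SM; [apply: gx|apply: gy].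
Qed.

Lemma gen_ring_incl A : A `<=` gen_ring A.
Proof. by move=> x Ax S _ AS; apply: AS. Qed.

Lemma gen_sigma_ring_sigma A : is_sigma_subring (gen_sigma_ring A).
Proof.
split; first split.
- by move=> S [[S1 _ _] _] _.
- by move=> x y gx gy S hS AS; case: (hS) => -[_ SB _] _; apply: SB; [apply: gx|apply: gy].
- by move=> x y gx gy S hS AS; case: (hS) => -[_ _ SM] _; apply: SM; [apply: gx|apply: gy].
- by move=> x gx S hS AS; case: (hS) => _ Ssh; apply: Ssh; apply: gx.
Qed.

Lemma gen_sigma_ring_incl A : A `<=` gen_sigma_ring A.
Proof. by move=> x Ax S _ AS; apply: AS. Qed.

End Sub.
Arguments sub0 {R S}.
Arguments subD {R S x y}.
Arguments subM {R S x y}.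
Arguments subSum {R T S} L F.
Arguments gen_ring_subring {R} A.
Arguments gen_ring_incl {R A}.
Arguments gen_sigma_ring_sigma {R} A.
Arguments gen_sigma_ring_incl {R A}.


Lemma pigeon (f : nat -> nat) n : (forall j, (j <= n)%N -> (f j < n)%N) ->
  exists j j', (j < j')%N /\ (j' <= n)%N /\ f j = f j'.
Proof.
move=> hf; apply: contrapT => hno.
have inj: injective (fun j : 'I_n.+1 => Ordinal (hf j (ltnSE (ltn_ord j)))).
  move=> a b /(congr1 val) /= eq; apply/val_inj => /=.
  case: (ltngtP a b) => // [ab|ba]; exfalso; apply: hno.
    by exists a, b; split => //; split => //; rewrite -ltnS ltn_ord.
  by exists b, a; split => //; split => //; rewrite -ltnS ltn_ord.
by have := leq_card _ inj; rewrite !card_ord ltnn.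
Qed.

Section Fourier.
Variables (R : realType) (G : zmodType) (H : set G).
Hypothesis Hsub : is_subgroup H.
Local Notation C := R[i].

Lemma H0 : H 0. Proof. by case: Hsub. Qed.
Lemma HN {x} : H x -> H (- x). Proof. by case: Hsub => _ hn _; apply: hn. Qed.
Lemma HD {x y} : H x -> H y -> H (x + y). Proof. by case: Hsub => _ _ hd; apply: hd. Qed.
Lemma HB {x y} : H x -> H y -> H (x - y). Proof. by move=> hx hy; apply: HD => //; apply: HN. Qed.
Lemma HMn {x} n : H x -> H (x *+ n).
Proof. by move=> hx; elim: n => [|n IH]; [rewrite mulr0n; apply: H0 | rewrite mulrS; apply: HD]. Qed.

Lemma order_ex (fi : finite_index H) x : exists m, (0 < m)%N /\ H (x *+ m).
Proof.
case: fi => r hr.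
have: forall j : nat, exists i : nat, (i < size r)%N /\ H (x *+ j - nth 0 r i).
  move=> j; case: (hr (x *+ j)) => y yr hy.
  by exists (index y r); rewrite index_mem nth_index.
case/choice => f hf.
have [j [j' [jj' [j'n fj]]]] := pigeon f (size r) (fun j _ => (hf j).1).
exists (j' - j)%N; split; first by rewrite subn_gt0.
rewrite mulrnBr; last exact: ltnW.
have := HB (hf j').2 (hf j).2; rewrite fj.
by rewrite opprB addrA subrK.
Qed.

Lemma uniform_M (fi : finite_index H) : exists M, (0 < M)%N /\ forall g, H (g *+ M).
Proof.
have fi' := fi; case: fi' => r hr.
have [M [M0 hM]] : exists M, (0 < M)%N /\ forall x, x \in r -> H (x *+ M).
  elim: r {hr} => [|x r [M [M0 hM]]]; first by exists 1%N.
  have [m [m0 hm]] := order_ex fi x.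
  exists (m * M)%N; split; first by rewrite muln_gt0 m0.
  move=> y; rewrite inE => /orP[/eqP->|yr].
    by rewrite mulrnA; apply: HMn.
  by rewrite mulnC mulrnA; apply: HMn; apply: hM.
exists M; split => // g; case: (hr g) => y yr hy.
by rewrite -(subrK y g) mulrnDl; apply: HD; [apply: HMn | apply: hM].
Qed.

Definition perH (f : G -> C) := forall g h, H h -> f (g + h) = f g.
Definition eigen (x : G) (f : G -> C) := exists l : C, forall g, f (g + x) = l * f g.

Section Piece.
Variables (M : nat) (w : C).
Hypothesis M0 : (0 < M)%N.
Hypothesis wP : M.-primitive_root w.

Definition piece (x : G) (f : G -> C) (j : nat) : G -> C :=
  fun g => M%:R^-1 * \sum_(l < M) w ^+ (j * l) * f (g + x *+ l).

Lemma geom0 (q : C) : q ^+ M = 1 -> q != 1 -> \sum_(j < M) q ^+ j = 0.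
Proof.
move=> qM q1; have := subrX1 q M; rewrite qM subrr => /esym/eqP.
by rewrite mulf_eq0 subr_eq0 (negbTE q1) /= => /eqP.
Qed.

Lemma piece_sum x f g : \sum_(j < M) piece x f j g = f g.
Proof.
rewrite /piece -big_distrr /= exchange_big /=.
have -> : \sum_(l < M) \sum_(j < M) w ^+ (j * l) * f (g + x *+ l)
        = \sum_(l < M) (if val l == 0%N then M%:R * f g else 0).
  apply: eq_bigr => l _; rewrite -big_distrl /=.
  case: eqP => [l0|l0].
    rewrite l0 mulr0n addr0; congr (_ * _).
    by rewrite (eq_bigr (fun _ => 1)) ?sumr_const ?card_ord // => j _; rewrite muln0 expr0.
  rewrite (eq_bigr (fun j : 'I_M => (w ^+ l) ^+ j)); last by move=> j _; rewrite mulnC exprM.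
  rewrite geom0 ?mul0r //.
    by rewrite -exprM [(l * M)%N]mulnC exprM (prim_expr_order wP) expr1n.
  rewrite -(prim_order_dvd wP) gtnNdvd //; first by rewrite lt0n; apply/eqP.
rewrite -big_mkcond /=.
move: M0; case: M => // M' _.
rewrite (big_pred1 ord0); last by move=> i; rewrite /= -val_eqE.
by rewrite mulrA mulVf ?mul1r // pnatr_eq0.
Qed.

Lemma piece_per x f j : perH f -> perH (piece x f j).
Proof.
move=> hf g h Hh; rewrite /piece; congr (_ * _); apply: eq_bigr => l _.
by rewrite addrAC (hf _ _ Hh).
Qed.

Lemma piece_eig x f j y lam : (forall g, f (g + y) = lam * f g) ->
  forall g, piece x f j (g + y) = lam * piece x f j g.
Proof.
move=> hf g; rewrite /piece mulrCA; congr (_ * _); rewrite big_distrr.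
by apply: eq_bigr => l _; rewrite addrAC hf mulrCA.
Qed.

Lemma cyc_sum n (T : nat -> C) : (0 < n)%N -> T n = T 0%N ->
  \sum_(l < n) T l.+1 = \sum_(l < n) T l.
Proof.
case: n => // n _ hT; rewrite big_ord_recr [RHS]big_ord_recl /= hT addrC.
by congr (_ + _); apply: eq_bigr => i _.
Qed.

Lemma w_neq0 : w != 0.
Proof.
apply/eqP => w0; have := prim_expr_order wP; rewrite w0 expr0n eqn0Ngt M0 /=.
by move/eqP; rewrite eq_sym oner_eq0.
Qed.

Lemma piece_new x f j : perH f -> H (x *+ M) -> eigen x (piece x f j).
Proof.
move=> hf hx.
have claim : forall g, w ^+ j * piece x f j (g + x) = piece x f j g.
  move=> g; rewrite /piece mulrCA; congr (_ * _); rewrite big_distrr /=.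
  pose T l := w ^+ (j * l) * f (g + x *+ l).
  rewrite (eq_bigr (fun l : 'I_M => T l.+1)); last first.
    by move=> l _; rewrite /T mulrA -exprD mulnS mulrS addrA.
  rewrite (@cyc_sum M T M0) //; rewrite /T mulr0n addr0 muln0 expr0 mul1r hf //.
  by rewrite mulnC exprM (prim_expr_order wP) expr1n mul1r.
exists (w ^+ j)^-1 => g; rewrite -(claim g) mulrA mulVf ?mul1r //.
by rewrite expf_neq0 // w_neq0.
Qed.

End Piece.

Definition Pxs (xs : seq G) (phi : G -> C) := perH phi /\ forall x, x \in xs -> eigen x phi.

Lemma decomp_step M (w : C) (M0 : (0 < M)%N) (wP : M.-primitive_root w)
  (hM : forall g, H (g *+ M)) x xs (Fs : seq (G -> C)) :
  allPr (Pxs xs) Fs -> exists Fs' : seq (G -> C),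
    (forall g, \sum_(phi <- Fs) phi g = \sum_(phi <- Fs') phi g) /\ allPr (Pxs (x :: xs)) Fs'.
Proof.
elim: Fs => [|phi Fs IH] /=; first by move=> _; exists [::].
case=> [[hper heig] hFs]; have [Fs' [hs hP]] := IH hFs.
exists ([seq piece M w x phi j | j <- index_iota 0 M] ++ Fs'); split.
  by move=> g; rewrite big_cat big_cons big_map big_mkord piece_sum // hs.
apply: allPr_cat => //; apply: allPr_map => j; split; first exact: piece_per.
move=> y; rewrite inE => /orP[/eqP->|yxs]; first exact: piece_new.
by case: (heig y yxs) => l hl; exists l; apply: piece_eig.
Qed.

Lemma decomp M (w : C) (M0 : (0 < M)%N) (wP : M.-primitive_root w)
  (hM : forall g, H (g *+ M)) (xs : seq G) (f : G -> C) : perH f ->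
  exists Fs : seq (G -> C),
    (forall g, f g = \sum_(phi <- Fs) phi g) /\ allPr (Pxs xs) Fs.
Proof.
move=> hf; elim: xs => [|x xs [Fs [hs hP]]].
  by exists [:: f]; split => [g|]; rewrite ?big_seq1 //=.
have [Fs' [hs' hP']] := @decomp_step M w M0 wP hM x xs Fs hP.
by exists Fs'; split => // g; rewrite hs hs'.
Qed.

Lemma phi_char (r : seq G) (hr : forall g, exists2 x, x \in r & H (g - x))
  M (M0 : (0 < M)%N) (hM : forall g, H (g *+ M)) (phi : G -> C) :
  Pxs r phi -> exists c (theta : G -> C),
    is_torsion_character theta /\ forall g, phi g = c * theta g.
Proof.
case=> hper heig.
have rep : forall g, exists l, forall a, phi (a + g) = l * phi a.
  move=> g; case: (hr g) => x xr hgx; case: (heig x xr) => l hl.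
  exists l => a; rewrite -{1}(subrK x g) addrA hl (hper _ _ hgx) //.
have key : forall a g, phi (a + g) * phi 0 = phi a * phi g.
  move=> a g; case: (rep g) => l hl.
  by rewrite hl -(add0r g) hl mulrA [l * phi a]mulrC.
case: (eqVneq (phi 0) 0) => [z|nz].
  exists 0, (fun _ => 1); split.
    split; first by split => [x y|x]; rewrite ?mulr1 ?normr1.
    by exists 1%N; split => // x; rewrite expr1n.
  move=> g; case: (rep g) => l hl; rewrite -(add0r g) hl z mulr0 mul0r //.
pose theta g := phi g / phi 0.
have thM : forall a g, theta (a + g) = theta a * theta g.
  by move=> a g; rewrite /theta mulrACA -key -mulrA mulVKf.
have th0 : theta 0 = 1 by rewrite /theta mulfV.
have thX : forall g n, theta (g *+ n) = theta g ^+ n.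
  by move=> g; elim=> [|n IH]; rewrite ?mulr0n ?expr0 // mulrS exprS thM IH.
have thT : forall g, theta g ^+ M = 1.
  by move=> g; rewrite -thX -[g *+ M]add0r /theta (hper _ _ (hM g)) mulfV.
exists (phi 0), theta; split.
  split; last by exists M; split.
  split=> // x; apply/eqP; rewrite -(pexpr_eq1 M0) ?normr_ge0 //.
  by rewrite -normrX thT normr1.
by move=> g; rewrite /theta mulrCA mulfV ?mulr1.
Qed.

Theorem fourier (fi : finite_index H) (f : G -> C) : perH f ->
  exists L : seq (C * (G -> C)),
    allPr (fun p => is_torsion_character p.2) L /\
    forall g, f g = \sum_(p <- L) p.1 * p.2 g.
Proof.
move=> hf; have [M [M0 hM]] := uniform_M fi.
have [w wP] := @prim_root_exists_C R M M0.
case: (fi) => r hr.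
have [Fs [hs hP]] := @decomp M w M0 wP hM r f hf.
suff [L [hL1 hL2]] : exists L : seq (C * (G -> C)),
    allPr (fun p => is_torsion_character p.2) L /\
    forall g, \sum_(phi <- Fs) phi g = \sum_(p <- L) p.1 * p.2 g.
  by exists L; split => // g; rewrite hs hL2.
elim: Fs {hs} hP => [|phi Fs IH] /=; first by move=> _; exists [::]; split => // g; rewrite !big_nil.
case=> hphi hFs; have [L [hL1 hL2]] := IH hFs.
have [c [theta [ht hct]]] := @phi_char r hr M M0 hM phi hphi.
exists ((c, theta) :: L); split => // g.
by rewrite !big_cons hL2 hct.
Qed.

End Fourier.
Arguments perH {R G} H f.
Arguments fourier {R G H} Hsub fi f.



Lemma allPr_all {T : Type} (P : T -> Prop) (s : seq T) : (forall x, P x) -> allPr P s.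
Proof. by move=> H; elim: s => //= x s IH; split. Qed.

Lemma allPr_impl {T : Type} (P Q : T -> Prop) (s : seq T) :
  (forall x, P x -> Q x) -> allPr P s -> allPr Q s.
Proof. by move=> H; elim: s => //= x s IH [Px Ps]; split; [apply: H | apply: IH]. Qed.

Lemma eq_big_allPr {T : Type} (V : zmodType) (P : T -> Prop) (s : seq T) (A B : T -> V) :
  allPr P s -> (forall x, P x -> A x = B x) -> \sum_(x <- s) A x = \sum_(x <- s) B x.
Proof.
move=> hs H; elim: s hs => [|x s IH] /=; first by rewrite !big_nil.
by case=> Px Ps; rewrite !big_cons H // IH.
Qed.

Section Chars.
Variables (R : realType) (G : zmodType) (theta : G -> R[i]).
Hypothesis ht : is_torsion_character theta.

Lemma thM x y : theta (x + y) = theta x * theta y.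
Proof. by case: ht => -[h _] _; apply: h. Qed.

Lemma th_neq0 x : theta x != 0.
Proof. case: ht => -[_ h] _; apply/eqP => e; have := h x; rewrite e normr0 => /eqP; by rewrite eq_sym oner_eq0. Qed.

Lemma th0 : theta 0 = 1.
Proof.
have e : theta 0 * theta 0 = theta 0 * 1 by rewrite -thM addr0 mulr1.
by apply: (mulfI (th_neq0 0)); rewrite -e.
Qed.

Lemma thNK x : theta (- x) * theta x = 1.
Proof. by rewrite -thM addNr th0. Qed.

Lemma tors_inv : is_torsion_character (fun g => theta (- g)).
Proof.
case: ht => -[hm hn] [n [n0 hX]]; split; first split.
- by move=> x y; rewrite opprD hm.
- by move=> x; apply: hn.
by exists n; split => // x; apply: hX.
Qed.

End Chars.
Arguments thM {R G theta}.
Arguments th_neq0 {R G theta}.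
Arguments th0 {R G theta}.
Arguments thNK {R G theta}.
Arguments tors_inv {R G theta}.


Section Main.
Variables (R : realType) (G : zmodType) (k : set (Seq R)) (alpha : G -> Seq R).
Hypothesis hk : is_base_ring k.
Hypothesis ha : fin_supp_in k alpha.
Local Notation C := R[i].

Lemma supp_list : exists S : seq G, uniq S /\ forall h, h \notin S -> alpha h = cseq 0.
Proof.
case: ha => _ /finite_seqP [s hs]; exists (undup s); split; first exact: undup_uniq.
move=> h; rewrite mem_undup => hn; apply: contrapT => ne.
have : [set g | alpha g <> cseq 0] h by [].
by rewrite hs /= => hin; move/negP: hn; apply.
Qed.

Definition Ssupp : seq G := projT1 (cid supp_list).
Lemma Ssupp_uniq : uniq Ssupp. Proof. exact: (projT2 (cid supp_list)).1. Qed.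
Lemma Ssupp_out h : h \notin Ssupp -> alpha h = cseq 0.
Proof. exact: (projT2 (cid supp_list)).2. Qed.

Lemma fsum_alpha t (F : G -> C) :
  \sum_(h \in [set: G]) alpha h t * F h = \sum_(h <- Ssupp) alpha h t * F h.
Proof.
rewrite (fsbigE Ssupp); [|exact: Ssupp_uniq|by move=> ?|].
  by apply: eq_bigl => i; rewrite in_setT.
by move=> i _ /Ssupp_out ->; rewrite /cseq mul0r.
Qed.

Definition Bgen : set (Seq R) :=
  k `|` [set x | exists theta : G -> C, is_torsion_character theta /\ x = alpha_hat_prod alpha theta].
Local Notation Rg := (gen_ring Bgen).

Lemma kc c : k (cseq c). Proof. by case: hk => _; apply. Qed.
Lemma k_sub : is_subring k. Proof. by case: hk => -[]. Qed.
Lemma Rg_k x : k x -> Rg x. Proof. by move=> kx; apply: gen_ring_incl; left. Qed.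
Lemma Rg_P theta : is_torsion_character theta -> Rg (alpha_hat_prod alpha theta).
Proof. by move=> ht; apply: gen_ring_incl; right; exists theta. Qed.

Lemma hat_in_k (theta : G -> C) : k (alpha_hat alpha theta).
Proof.
have -> : alpha_hat alpha theta = fun t => \sum_(p <- Ssupp) alpha p t * cseq (theta p) t.
  by apply: funext => t; rewrite /alpha_hat fsum_alpha.
apply: (subSum Ssupp (fun p t => alpha p t * cseq (theta p) t) k_sub).
apply: allPr_all => p; apply: (subM k_sub); [by case: ha | exact: kc].
Qed.

Lemma Rg_sigma : is_sigma_subring Rg.
Proof.
split; first exact: gen_ring_subring.
move=> x Rx.
pose T := [set y | Rg y /\ Rg (shift y)].
have hRg := gen_ring_subring Bgen.
have hT : is_subring T.
  case: (hRg) => R1 RB RM; split.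
  - by split.
  - by move=> y z [Ry Rsy] [Rz Rsz]; split; [apply: RB | exact: (RB _ _ Rsy Rsz)].
  - by move=> y z [Ry Rsy] [Rz Rsz]; split; [apply: RM | exact: (RM _ _ Rsy Rsz)].
have BT : Bgen `<=` T.
  move=> y [ky|[theta [ht ->]]].
    by split; apply: Rg_k => //; case: hk => -[_ hs] _; apply: hs.
  split; first exact: Rg_P.
  have -> : shift (alpha_hat_prod alpha theta)
          = fun t => alpha_hat_prod alpha theta t * alpha_hat alpha theta t.
    by apply: funext => t; rewrite /shift /alpha_hat_prod big_ord_recr.
  by apply: (subM hRg); [exact: Rg_P | apply: Rg_k; exact: hat_in_k].
by case: (Rx T hT BT).
Qed.

Lemma sum_step (c : C) (theta : G -> C) (g : G) (t : nat) (P : C) :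
  is_torsion_character theta ->
  \sum_(h <- Ssupp) alpha h t * (c * theta (g - h) * P)
  = c * theta g * (P * \sum_(h <- Ssupp) alpha h t * theta (- h)).
Proof.
move=> ht; rewrite !big_distrr; apply: eq_bigr => h _.
rewrite (thM ht) -[RHS]/(c * theta g * (P * (alpha h t * theta (- h)))); ring.
Qed.

Lemma sol_in_Rg (s : G -> Seq R) (H : set G) :
  is_subgroup H -> finite_index H -> is_solution alpha s -> periodic H s ->
  forall g, Rg (s g).
Proof.
move=> hH fi hs hp.
have hf : perH H (fun g => s g 0%N) by move=> g h Hh /=; rewrite hp.
have [L [hL1 hL2]] := fourier hH fi _ hf.
pose P (p : C * (G -> C)) := alpha_hat_prod alpha (fun h => p.2 (- h)).
have expand : forall t g, s g t = \sum_(p <- L) p.1 * p.2 g * P p t.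
  elim=> [|t IH] g.
    rewrite hL2; apply: eq_bigr => p _.
    by rewrite /P /alpha_hat_prod big_ord0 mulr1.
  rewrite hs fsum_alpha.
  under eq_bigr do rewrite IH big_distrr.
  rewrite exchange_big /=.
  apply: (@eq_big_allPr _ _ _ _ _ _ hL1) => p hpt.
  rewrite /P /alpha_hat_prod big_ord_recr /= -/(alpha_hat_prod _ _ _).
  rewrite /alpha_hat fsum_alpha -(sum_step _ _ _ _ _ hpt).
  by apply: eq_bigr => h _.
move=> g.
have -> : s g = fun t => \sum_(p <- L) cseq (p.1 * p.2 g) t * P p t.
  by apply: funext => t; rewrite expand.
apply: (subSum L (fun p t => cseq (p.1 * p.2 g) t * P p t) (gen_ring_subring Bgen)).
apply: (@allPr_impl _ _ _ _ _ hL1); move=> p hpt.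
apply: (subM (gen_ring_subring Bgen)); first by apply: Rg_k; apply: kc.
by apply: Rg_P; apply: tors_inv.
Qed.

Lemma P_in_Lper (theta : G -> C) : is_torsion_character theta ->
  L_per k alpha (alpha_hat_prod alpha theta).
Proof.
move=> ht; apply: gen_sigma_ring_incl; right.
pose P := alpha_hat_prod alpha theta.
pose s := fun (g : G) (t : nat) => theta (- g) * P t.
pose H := [set g : G | theta g = 1].
have thNe : forall x, H x -> theta (- x) = 1.
  by move=> x Hx; rewrite -(thNK ht x) Hx mulr1.
exists s, H, 0; split.
- split; first exact: (th0 ht).
  + exact: thNe.
  + by move=> x y Hx Hy; rewrite /H /= (thM ht) Hx Hy mulr1.
- case: (ht) => _ [n [n0 hX]].
  have [rs hrs] := @roots_list R n n0.
  pose pre (z : C) : G := match pselect (exists g, theta g = z) with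
                           | left e => projT1 (cid e) | right _ => 0 end.
  have preP : forall z, (exists g, theta g = z) -> theta (pre z) = z.
    move=> z ez; rewrite /pre; case: pselect => [e|ne]; last by [].
    exact: (projT2 (cid e)).
  exists (map pre rs) => g; exists (pre (theta g)).
    by apply: map_f; apply: hrs; apply: hX.
  rewrite /H /= (thM ht) -{1}(preP (theta g)); last by exists g.
  by rewrite -(thM ht) subrr (th0 ht).
- move=> g t; rewrite fsum_alpha /s /P /alpha_hat_prod big_ord_recr /=.
  rewrite -/(alpha_hat_prod _ _ _) /alpha_hat fsum_alpha !big_distrr /=.
  apply: eq_bigr => h _; rewrite opprB (thM ht).
  rewrite -[RHS]/(alpha h t * (theta h * theta (- g) * alpha_hat_prod alpha theta t)).
  rewrite -[LHS]/(theta (- g) * (alpha_hat_prod alpha theta t * (alpha h t * theta h))).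
  ring.
- move=> g h Hh; apply: funext => t.
  by rewrite /s opprD (thM ht) (thNe _ Hh) mulr1.
- by apply: funext => t; rewrite /s oppr0 (th0 ht) mul1r.
Qed.

Theorem main_thm :
  L_per k alpha =
  gen_ring (k `|` [set x | exists theta : G -> R[i],
                       is_torsion_character theta /\ x = alpha_hat_prod alpha theta]).
Proof.
apply/seteqP; split => x hx.
- apply: hx; first exact: Rg_sigma.
  move=> y [ky|[s [H [g [hH fi hs hp ->]]]]]; first exact: Rg_k.
  exact: (sol_in_Rg _ _ hH fi hs hp).
- apply: hx; first exact: (gen_sigma_ring_sigma _).1.
  move=> y [ky|[theta [ht ->]]]; first by apply: gen_sigma_ring_incl; left.
  exact: P_in_Lper.
Qed.

End Main.


Theorem theorem2p9 (R : realType) (G : zmodType) (k : set (Seq R))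
  (alpha : G -> Seq R) :
  is_base_ring k -> fin_supp_in k alpha ->
  L_per k alpha =
  gen_ring (k `|` [set x | exists theta : G -> R[i],
                       is_torsion_character theta /\ x = alpha_hat_prod alpha theta]).
Proof.
move=> hk ha; exact: (@main_thm R G k alpha hk ha).
Qed.
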